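(* Let $(\{T_g\}_{g\in G},\{\gamma_{g,h}\}_{g,h\in G},u)$ be a (global) action of a group $G$ on a (strict) monoidal category $\mathcal{C}$, and let $X$ be an object of $\mathcal{C}$. (a) Given a family $\{\sigma^X_g\}_{g\in G}$ making $(X,\{\sigma^X_g\})$ a partially $G$-equivariant object, there is a family $\{\theta_g\}_{g\in G}$ making $(X,\{\theta_g\})$ a (global) $G$-equivariant object. (b) Conversely, given a family $\{\theta_g\}_{g\in G}$ making $(X,\{\theta_g\})$ a $G$-equivariant object, there is a family $\{\sigma^X_g\}_{g\in G}$ making $(X,\{\sigma^X_g\})$ a partially $G$-equivariant object.
   Context: A (global) action of $G$ (unit $e$) on the monoidal category $\mathcal{C}$ consists of monoidal auto-equivalences $(T_g,J^g,J^{g0})$ of $\mathcal{C}$ (with $J^g\colon T_g(-)\otimes T_g(-)\Rightarrow T_g(-\otimes-)$ a natural isomorphism satisfying the hexagon axiom and $J^{g0}\colon\mathbb{1}\to T_g(\mathbb{1})$ an isomorphism compatible with the unit constraints), monoidal natural isomorphisms $\gamma_{g,h}\colon T_gT_h\Rightarrow T_{gh}$ and $u\colon\mathrm{Id}_{\mathcal{C}}\Rightarrow T_e$, such that $(\gamma_{gh,k})_X\circ(\gamma_{g,h})_{T_k(X)}=(\gamma_{g,hk})_X\circ T_g((\gamma_{h,k})_X)$, and $u_{T_g(X)}$, $(\gamma_{e,g})_X$ are mutually inverse, as are $T_g(u_X)$, $(\gamma_{g,e})_X$. A $G$-equivariant object is a pair $(X,\{\theta_g\}_{g\in G})$ with isomorphisms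 $\theta_g\colon T_g(X)\to X$ such that $\theta_{gh}\circ(\gamma_{g,h})_X=\theta_g\circ T_g(\theta_h)$ for all $g,h$ and $\theta_e\circ u_X=\mathrm{id}_X$. A partially $G$-equivariant object is a pair $(X,\{\sigma^X_g\}_{g\in G})$ with natural isomorphisms $\sigma^X_g\colon T_g(X\otimes-)\Rightarrow X\otimes T_g(-)$ such that for all $g,h\in G$ and objects $Y$: $(\sigma^X_{gh})_Y\circ(\gamma_{g,h})_{X\otimes Y}=(X\otimes(\gamma_{g,h})_Y)\circ(\sigma^X_g)_{T_h(Y)}\circ T_g((\sigma^X_h)_Y)$, and $(\sigma^X_e)_Y\circ u_{X\otimes Y}=X\otimes u_Y$. *)

(* Defs.v *)
Record Group := {
  gcar :> Type;
  gmul : gcar -> gcar -> gcar;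
  gone : gcar;
  ginv : gcar -> gcar;
  gmulA : forall x y z, gmul x (gmul y z) = gmul (gmul x y) z;
  gmul1l : forall x, gmul gone x = x;
  gmul1r : forall x, gmul x gone = x;
  gmulVl : forall x, gmul (ginv x) x = gone;
  gmulVr : forall x, gmul x (ginv x) = gone }.
Arguments gmul {g} x y : rename.
Arguments gone {g} : rename.
Arguments ginv {g} x : rename.

Record Category := {
  ob :> Type;
  hom : ob -> ob -> Type;
  idm : forall a, hom a a;
  comp : forall a b c, hom b c -> hom a b -> hom a c;
  comp_id_l : forall a b (f : hom a b), comp a b b (idm b) f = f;
  comp_id_r : forall a b (f : hom a b), comp a a b f (idm a) = f;
  comp_assoc : forall a b c d (f : hom a b) (g : hom b c) (h : hom c d),
      comp a c d h (comp a b c g f) = comp a b d (comp b c d h g) f }.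
Arguments hom {C} a b : rename.
Arguments idm {C} a : rename.
Arguments comp {C a b c} g f : rename.

Notation "g ⊚ f" := (comp g f) (at level 40, left associativity).

Definition is_iso {C : Category} {a b : C} (f : hom a b) : Prop :=
  exists g : hom b a, g ⊚ f = idm a /\ f ⊚ g = idm b.

Definition eq_hom {C : Category} {a b : C} (e : a = b) : hom a b :=
  match e in _ = b' return hom a b' with eq_refl => idm a end.

Record MonoidalCategory := {
  mcat :> Category;
  tens : ob mcat -> ob mcat -> ob mcat;
  tensm : forall a a' b b' : ob mcat,
      hom a a' -> hom b b' -> hom (tens a b) (tens a' b');
  munit : ob mcat;
  tensm_id : forall a b, tensm a a b b (idm a) (idm b) = idm (tens a b);
  tensm_comp : forall a a' a'' b b' b''
      (f : hom a a') (f' : hom a' a'') (g : hom b b') (g' : hom b' b''),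
      tensm a a'' b b'' (f' ⊚ f) (g' ⊚ g)
      = tensm a' a'' b' b'' f' g' ⊚ tensm a a' b b' f g;
  assoc : forall a b c, hom (tens (tens a b) c) (tens a (tens b c));
  lunit : forall a, hom (tens munit a) a;
  runit : forall a, hom (tens a munit) a;
  assoc_iso : forall a b c, is_iso (assoc a b c);
  lunit_iso : forall a, is_iso (lunit a);
  runit_iso : forall a, is_iso (runit a);
  assoc_nat : forall a a' b b' c c' (f : hom a a') (g : hom b b') (h : hom c c'),
      assoc a' b' c' ⊚ tensm _ _ _ _ (tensm _ _ _ _ f g) h
      = tensm _ _ _ _ f (tensm _ _ _ _ g h) ⊚ assoc a b c;
  lunit_nat : forall a a' (f : hom a a'),
      lunit a' ⊚ tensm _ _ _ _ (idm munit) f = f ⊚ lunit a;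
  runit_nat : forall a a' (f : hom a a'),
      runit a' ⊚ tensm _ _ _ _ f (idm munit) = f ⊚ runit a;
  pentagon : forall a b c d,
      assoc a b (tens c d) ⊚ assoc (tens a b) c d
      = tensm _ _ _ _ (idm a) (assoc b c d) ⊚ assoc a (tens b c) d
        ⊚ tensm _ _ _ _ (assoc a b c) (idm d);
  triangle : forall a b,
      tensm _ _ _ _ (idm a) (lunit b) ⊚ assoc a munit b
      = tensm _ _ _ _ (runit a) (idm b) }.
Arguments tens {M} a b : rename.
Arguments tensm {M a a' b b'} f g : rename.
Arguments munit {M} : rename.
Arguments assoc {M} a b c : rename.
Arguments lunit {M} a : rename.
Arguments runit {M} a : rename.

Notation "a ⊗ b" := (tens a b) (at level 35, right associativity).
Notation "f ⊗m g" := (tensm f g) (at level 35, right associativity).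

Definition strict_monoidal (M : MonoidalCategory) : Prop :=
  (forall a b c : M, exists e : (a ⊗ b) ⊗ c = a ⊗ (b ⊗ c), assoc a b c = eq_hom e)
  /\ (forall a : M, exists e : munit ⊗ a = a, lunit a = eq_hom e)
  /\ (forall a : M, exists e : a ⊗ munit = a, runit a = eq_hom e).

Record EndoFunctor (C : Category) := {
  fobj :> ob C -> ob C;
  fmap : forall a b : ob C, hom a b -> hom (fobj a) (fobj b);
  fmap_id : forall a, fmap a a (idm a) = idm (fobj a);
  fmap_comp : forall a b c (f : hom a b) (g : hom b c),
      fmap a c (g ⊚ f) = fmap b c g ⊚ fmap a b f }.
Arguments fobj {C} F a : rename.
Arguments fmap {C} F {a b} f : rename.

Definition is_equivalence {C : Category} (F : EndoFunctor C) : Prop :=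
  (forall (a b : C) (f g : hom a b), fmap F f = fmap F g -> f = g)
  /\ (forall (a b : C) (k : hom (F a) (F b)), exists f : hom a b, fmap F f = k)
  /\ (forall b : C, exists (a : C) (f : hom (F a) b), is_iso f).

Record MonoidalFunctor (M : MonoidalCategory) := {
  mfun :> EndoFunctor M;
  mJ : forall a b : ob M, hom (mfun a ⊗ mfun b) (mfun (a ⊗ b));
  mJ0 : hom munit (mfun munit);
  mJ_iso : forall a b, is_iso (mJ a b);
  mJ_nat : forall a a' b b' (f : hom a a') (g : hom b b'),
      mJ a' b' ⊚ (fmap mfun f ⊗m fmap mfun g) = fmap mfun (f ⊗m g) ⊚ mJ a b;
  mJ0_iso : is_iso mJ0;
  mJ_hexagon : forall a b c,
      fmap mfun (assoc a b c) ⊚ mJ (a ⊗ b) c ⊚ (mJ a b ⊗m idm (mfun c))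
      = mJ a (b ⊗ c) ⊚ (idm (mfun a) ⊗m mJ b c)
        ⊚ assoc (mfun a) (mfun b) (mfun c);
  mJ0_lunit : forall a,
      fmap mfun (lunit a) ⊚ mJ munit a ⊚ (mJ0 ⊗m idm (mfun a)) = lunit (mfun a);
  mJ0_runit : forall a,
      fmap mfun (runit a) ⊚ mJ a munit ⊚ (idm (mfun a) ⊗m mJ0) = runit (mfun a) }.
Arguments mfun {M} T : rename.
Arguments mJ {M} T a b : rename.
Arguments mJ0 {M} T : rename.

Record GAction (G : Group) (M : MonoidalCategory) := {
  act : G -> MonoidalFunctor M;
  act_equiv : forall g, is_equivalence (mfun (act g));
  gam : forall (g h : G) (a : ob M), hom (act g (act h a)) (act (gmul g h) a);
  uu : forall a : ob M, hom a (act gone a);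
  gam_iso : forall g h a, is_iso (gam g h a);
  gam_nat : forall g h a b (f : hom a b),
      gam g h b ⊚ fmap (act g) (fmap (act h) f) = fmap (act (gmul g h)) f ⊚ gam g h a;
  gam_monJ : forall g h a b,
      gam g h (a ⊗ b) ⊚ fmap (act g) (mJ (act h) a b) ⊚ mJ (act g) (act h a) (act h b)
      = mJ (act (gmul g h)) a b ⊚ (gam g h a ⊗m gam g h b);
  gam_monJ0 : forall g h,
      gam g h munit ⊚ fmap (act g) (mJ0 (act h)) ⊚ mJ0 (act g) = mJ0 (act (gmul g h));
  uu_iso : forall a, is_iso (uu a);
  uu_nat : forall a b (f : hom a b), uu b ⊚ f = fmap (act gone) f ⊚ uu a;
  uu_monJ : forall a b, uu (a ⊗ b) = mJ (act gone) a b ⊚ (uu a ⊗m uu b);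
  uu_monJ0 : uu munit = mJ0 (act gone);
  (* (gamma_{gh,k})_X o (gamma_{g,h})_{T_k X} = (gamma_{g,hk})_X o T_g((gamma_{h,k})_X),
     where T_{g(hk)} X and T_{(gh)k} X are identified via associativity of G *)
  gam_assoc : forall g h k a,
      gam (gmul g h) k a ⊚ gam g h (act k a)
      = eq_hom (f_equal (fun x => fobj (act x) a) (gmulA G g h k))
        ⊚ gam g (gmul h k) a ⊚ fmap (act g) (gam h k a);
  gam_unit_l1 : forall g a,
      eq_hom (f_equal (fun x => fobj (act x) a) (gmul1l G g)) ⊚ gam gone g a
        ⊚ uu (act g a) = idm (act g a);
  gam_unit_l2 : forall g a,
      uu (act g a) ⊚ (eq_hom (f_equal (fun x => fobj (act x) a) (gmul1l G g))
        ⊚ gam gone g a) = idm (act gone (act g a));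
  gam_unit_r1 : forall g a,
      eq_hom (f_equal (fun x => fobj (act x) a) (gmul1r G g)) ⊚ gam g gone a
        ⊚ fmap (act g) (uu a) = idm (act g a);
  gam_unit_r2 : forall g a,
      fmap (act g) (uu a) ⊚ (eq_hom (f_equal (fun x => fobj (act x) a) (gmul1r G g))
        ⊚ gam g gone a) = idm (act g (act gone a)) }.
Arguments act {G M} A g : rename.
Arguments gam {G M} A g h a : rename.
Arguments uu {G M} A a : rename.

Definition equivariant {G : Group} {M : MonoidalCategory} (A : GAction G M)
    (X : ob M) (theta : forall g : G, hom (act A g X) X) : Prop :=
  (forall g, is_iso (theta g))
  /\ (forall g h, theta (gmul g h) ⊚ gam A g h X = theta g ⊚ fmap (act A g) (theta h))
  /\ theta gone ⊚ uu A X = idm X.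

Definition partially_equivariant {G : Group} {M : MonoidalCategory} (A : GAction G M)
    (X : ob M) (sigma : forall (g : G) (Y : ob M), hom (act A g (X ⊗ Y)) (X ⊗ act A g Y))
    : Prop :=
  (forall g Y, is_iso (sigma g Y))
  /\ (forall g Y Y' (f : hom Y Y'),
        sigma g Y' ⊚ fmap (act A g) (idm X ⊗m f) = (idm X ⊗m fmap (act A g) f) ⊚ sigma g Y)
  /\ (forall g h Y,
        sigma (gmul g h) Y ⊚ gam A g h (X ⊗ Y)
        = (idm X ⊗m gam A g h Y) ⊚ sigma g (act A h Y) ⊚ fmap (act A g) (sigma h Y))
  /\ (forall Y, sigma gone Y ⊚ uu A (X ⊗ Y) = idm X ⊗m uu A Y).

(* Main.v *)
Require Import Defs.
From Stdlib Require Import IndefiniteDescription.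

Definition inv {C : Category} {a b : C} (f : hom a b) (H : is_iso f) : hom b a :=
  proj1_sig (constructive_indefinite_description _ H).

Section Inv.
Context {C : Category}.
Lemma inv_l {a b : C} (f : hom a b) H : inv f H ⊚ f = idm a.
Proof. unfold inv. destruct (constructive_indefinite_description _ H) as [g [H1 H2]]. exact H1. Qed.
Lemma inv_r {a b : C} (f : hom a b) H : f ⊚ inv f H = idm b.
Proof. unfold inv. destruct (constructive_indefinite_description _ H) as [g [H1 H2]]. exact H2. Qed.
Lemma inv_l' {a b c : C} (f : hom a b) H (x : hom a c) : x ⊚ inv f H ⊚ f = x.
Proof. rewrite <- comp_assoc, inv_l, comp_id_r. reflexivity. Qed.
Lemma inv_r' {a b c : C} (f : hom a b) H (x : hom b c) : x ⊚ f ⊚ inv f H = x.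
Proof. rewrite <- comp_assoc, inv_r, comp_id_r. reflexivity. Qed.
Lemma iso_inv {a b : C} (f : hom a b) H : is_iso (inv f H).
Proof. exists f. split; [apply inv_r | apply inv_l]. Qed.
Lemma iso_id (a : C) : is_iso (idm a).
Proof. exists (idm a). split; apply comp_id_l. Qed.
Lemma iso_comp {a b c : C} (f : hom a b) (g : hom b c) : is_iso f -> is_iso g -> is_iso (g ⊚ f).
Proof. intros [f' [F1 F2]] [g' [G1 G2]]. exists (f' ⊚ g'). split.
 - rewrite !comp_assoc, <- (comp_assoc _ _ _ _ _ g g' f'), G1, comp_id_r. exact F1.
 - rewrite !comp_assoc, <- (comp_assoc _ _ _ _ _ f' f g), F2, comp_id_r. exact G2. Qed.
Lemma iso_epi {a b c : C} (p : hom a b) (x y : hom b c) : is_iso p -> x ⊚ p = y ⊚ p -> x = y.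
Proof. intros [p' [P1 P2]] E. rewrite <- (comp_id_r _ _ _ x), <- (comp_id_r _ _ _ y), <- P2, !comp_assoc, E. reflexivity. Qed.
Lemma inv_swap {a b c d : C} (q : hom b d) Hq (x : hom a b) (y : hom c d) (p : hom a c) Hp :
  q ⊚ x = y ⊚ p -> inv q Hq ⊚ y = x ⊚ inv p Hp.
Proof. intros E. rewrite <- (comp_id_r _ _ _ (inv q Hq ⊚ y)), <- (inv_r p Hp), !comp_assoc.
  rewrite <- (comp_assoc _ _ _ _ _ p y (inv q Hq)), <- E, comp_assoc, inv_l, comp_id_l. reflexivity. Qed.
End Inv.

Lemma iso_fmap {C : Category} (F : EndoFunctor C) {a b : C} (f : hom a b) : is_iso f -> is_iso (fmap F f).
Proof. intros [f' [H1 H2]]. exists (fmap F f'). rewrite <- !fmap_comp, H1, H2, !fmap_id. split; reflexivity. Qed.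

Lemma iso_tensm {M : MonoidalCategory} {a a' b b' : M} (f : hom a a') (g : hom b b') :
  is_iso f -> is_iso g -> is_iso (f ⊗m g).
Proof. intros [f' [F1 F2]] [g' [G1 G2]]. exists (f' ⊗m g'). rewrite <- !tensm_comp, F1, F2, G1, G2, !tensm_id. split; reflexivity. Qed.
Lemma shift3 {C : Category} {a b c d e : C} (p : hom a b) (q : hom b c) (r : hom c d) (s : hom a d) (x : hom d e) :
  r ⊚ q ⊚ p = s -> x ⊚ r ⊚ q ⊚ p = x ⊚ s.
Proof. intros E. rewrite <- E, !comp_assoc. reflexivity. Qed.
Lemma shift2 {C : Category} {a b c e : C} (p : hom a b) (q : hom b c) (s : hom a c) (x : hom c e) :
  q ⊚ p = s -> x ⊚ q ⊚ p = x ⊚ s.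
Proof. intros E. rewrite <- E, !comp_assoc. reflexivity. Qed.
Lemma fmap_inv_l' {C : Category} (F : EndoFunctor C) {a b c : C} (f : hom a b) H (x : hom (F a) c) :
  x ⊚ fmap F (inv f H) ⊚ fmap F f = x.
Proof. rewrite <- comp_assoc, <- fmap_comp, inv_l, fmap_id, comp_id_r. reflexivity. Qed.
Lemma fmap_inv_r' {C : Category} (F : EndoFunctor C) {a b c : C} (f : hom a b) H (x : hom (F b) c) :
  x ⊚ fmap F f ⊚ fmap F (inv f H) = x.
Proof. rewrite <- comp_assoc, <- fmap_comp, inv_r, fmap_id, comp_id_r. reflexivity. Qed.

Lemma partb (G : Group) (M : MonoidalCategory) (A : GAction G M) (X : ob M)
  (theta : forall g : G, hom (act A g X) X) : equivariant A X theta ->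
  exists sigma : forall (g : G) (Y : ob M), hom (act A g (X ⊗ Y)) (X ⊗ act A g Y),
       partially_equivariant A X sigma.
Proof.
  intros [Hiso [Hcoc Hunit]].
  exists (fun g Y => (theta g ⊗m idm (act A g Y)) ⊚ inv (mJ (act A g) X Y) (mJ_iso _ _ _ _)).
  split; [|split; [|split]].
  - intros g Y. apply iso_comp; [apply iso_inv | apply iso_tensm; [apply Hiso | apply iso_id]].
  - intros g Y Y' f. simpl.
    rewrite <- comp_assoc.
    rewrite (inv_swap _ _ _ _ _ (mJ_iso _ _ X Y) (mJ_nat _ _ _ _ _ _ (idm X) f)).
    rewrite fmap_id, !comp_assoc, <- !tensm_comp, !comp_id_l, !comp_id_r. reflexivity.
  - intros g h Y. simpl.
    apply (iso_epi (fmap (act A g) (mJ (act A h) X Y) ⊚ mJ (act A g) (act A h X) (act A h Y))).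
    { apply iso_comp; [apply mJ_iso | apply iso_fmap, mJ_iso]. }
    rewrite !comp_assoc.
    rewrite (shift3 _ _ _ _ _ (gam_monJ _ _ _ g h X Y)), !comp_assoc, inv_l', <- tensm_comp, Hcoc, comp_id_l.
    rewrite fmap_comp, !comp_assoc, fmap_inv_l'.
    rewrite (shift2 _ _ _ _ (eq_sym (mJ_nat _ _ _ _ _ _ (theta h) (idm (act A h Y))))).
    rewrite !comp_assoc, inv_l', fmap_id, <- !tensm_comp, !comp_id_l, !comp_id_r. reflexivity.
  - intros Y. simpl. rewrite uu_monJ, !comp_assoc, inv_l', <- tensm_comp, Hunit, comp_id_l. reflexivity.
Qed.

Lemma parta (G : Group) (M : MonoidalCategory) (A : GAction G M) (X : ob M)
  (sigma : forall (g : G) (Y : ob M), hom (act A g (X ⊗ Y)) (X ⊗ act A g Y)) :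
  partially_equivariant A X sigma ->
  exists theta : forall g : G, hom (act A g X) X, equivariant A X theta.
Proof.
  intros [Hiso [Hn [Hc Hu]]].
  exists (fun g => runit X ⊚ (idm X ⊗m inv (mJ0 (act A g)) (mJ0_iso _ _)) ⊚ sigma g munit
            ⊚ fmap (act A g) (inv (runit X) (runit_iso _ _))).
  split; [|split].
  - intros g. repeat apply iso_comp; try apply iso_fmap; try apply iso_inv; try apply Hiso;
      try apply runit_iso; apply iso_tensm; [apply iso_id | apply iso_inv].
  - intros g h. simpl.
    assert (K : inv (mJ0 (act A (gmul g h))) (mJ0_iso _ _) ⊚ gam A g h munit
                = inv (mJ0 (act A g)) (mJ0_iso _ _) ⊚ fmap (act A g) (inv (mJ0 (act A h)) (mJ0_iso _ _))).
    { apply (iso_epi (fmap (act A g) (mJ0 (act A h)) ⊚ mJ0 (act A g))).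
      { apply iso_comp; [apply mJ0_iso | apply iso_fmap, mJ0_iso]. }
      rewrite !comp_assoc, (shift3 _ _ _ _ _ (gam_monJ0 _ _ _ g h)), inv_l, fmap_inv_l', inv_l.
      reflexivity. }
    rewrite (shift2 _ _ _ _ (eq_sym (gam_nat _ _ _ g h _ _ _))), !comp_assoc.
    rewrite (shift2 _ _ _ _ (Hc g h munit)), !comp_assoc.
    rewrite !fmap_comp, !comp_assoc, fmap_inv_l'.
    rewrite (shift2 _ _ _ _ (Hn g _ _ _)), !comp_assoc.
    rewrite !(shift2 _ _ _ _ (eq_sym (tensm_comp _ _ _ _ _ _ _ _ _ _ _))), K, comp_id_l. reflexivity.
  - simpl.
    rewrite (shift2 _ _ _ _ (eq_sym (uu_nat _ _ _ _ _ _))), !comp_assoc.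
    rewrite (shift2 _ _ _ _ (Hu munit)), uu_monJ0, (shift2 _ _ _ _ (eq_sym (tensm_comp M _ _ _ _ _ _ (idm X) (idm X) (mJ0 (act A gone)) (inv _ (mJ0_iso M (act A gone)))))), inv_l, comp_id_l, tensm_id,
      comp_id_r, inv_r. reflexivity.
Qed.

Theorem theorem6p4 (G : Group) (M : MonoidalCategory) (Mstrict : strict_monoidal M)
    (A : GAction G M) (X : ob M) :
  ((exists sigma : forall (g : G) (Y : ob M), hom (act A g (X ⊗ Y)) (X ⊗ act A g Y),
       partially_equivariant A X sigma) ->
     exists theta : forall g : G, hom (act A g X) X, equivariant A X theta)
  /\
  ((exists theta : forall g : G, hom (act A g X) X, equivariant A X theta) ->
     exists sigma : forall (g : G) (Y : ob M), hom (act A g (X ⊗ Y)) (X ⊗ act A g Y),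
       partially_equivariant A X sigma).
Proof.
  split.
  - intros [sigma Hs]. exact (parta G M A X sigma Hs).
  - intros [theta Ht]. exact (partb G M A X theta Ht).
Qed.
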